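(* The categorization functor $cat:\mathbf{MdTop}\to\mathbf{Flow}$ is neither a left adjoint nor a right adjoint. In particular, it cannot be a left or a right Quillen equivalence.
   Context: Work in $\mathbf{Top}$, the category of $\Delta$-generated spaces (or $\Delta$-Hausdorff $\Delta$-generated spaces), cartesian closed; subsets carry the $\Delta$-kelleyfication of the relative topology. $\mathcal{G}(1,1)$ is the space of nondecreasing homeomorphisms $[0,1]\to[0,1]$. For paths $\gamma_1,\gamma_2$ on $[0,1]$ with $\gamma_1(1)=\gamma_2(0)$, $(\gamma_1*_N\gamma_2)(t)=\gamma_1(2t)$ for $t\le1/2$, $\gamma_2(2t-1)$ for $t\ge1/2$. A multipointed $d$-space $X=(|X|,X^0,\mathbb{P}^{\mathcal{G}}X)$ is a space $|X|$, a subset $X^0$ of states, and a set of continuous execution paths $[0,1]\to|X|$ with endpoints in $X^0$, stable under precomposition by $\mathcal{G}(1,1)$ and normalized composition; maps are continuous maps preserving states and execution paths; category $\mathbf{MdTop}$. $\mathbb{P}^{\mathcal{G}}_{\alpha,\beta}X$ (paths from $\alpha$ to $\beta$) is a subspace of the mapping space ${\rm TOP}([0,1],|X|)$. A flow $Y$ is a small semicategory enriched over $(\mathbf{Top},\times)$: a set $Y^0$ of states, spaces $\mathbb{P}_{\alpha,\beta}Y$, associative continuous compositions $\mathbb{P}_{\alpha,\beta}Y\times\mathbb{P}_{\beta,\gamma}Y\to\mathbb{P}_{\alpha,\gamma}Y$ (no identities); category $\mathbf{Flow}$. The categorization functor: $cat(X)$ has states $X^0$, $\mathbb{P}_{\alpha,\beta}cat(X)$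 the coequalizer of the two maps $\mathbb{P}^{\mathcal{G}}_{\alpha,\beta}X\times\mathcal{G}(1,1)\rightrightarrows\mathbb{P}^{\mathcal{G}}_{\alpha,\beta}X$, $(c,\phi)\mapsto c$ and $(c,\phi)\mapsto c\circ\phi$, and composition induced by normalized composition $*_N$. *)

(* Defs.v *)
From Stdlib Require Import Reals Lra ClassicalEpsilon Relation_Operators.
Open Scope R_scope.

Definition topology (T : Type) : Type := (T -> Prop) -> Prop.

Definition is_topology {T : Type} (O : topology T) : Prop :=
  O (fun _ => True) /\
  (forall U V, O U -> O V -> O (fun x => U x /\ V x)) /\
  (forall F : (T -> Prop) -> Prop, (forall U, F U -> O U) ->
     O (fun x => exists U, F U /\ U x)).

Definition continuous {A B : Type} (OA : topology A) (OB : topology B)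
  (f : A -> B) : Prop := forall V, OB V -> OA (fun x => V (f x)).

(* the cube [0,1]^n (homeomorphic to the topological n-simplex) *)
Definition cube (n : nat) : Type :=
  { x : nat -> R | (forall i, (i < n)%nat -> 0 <= x i <= 1) /\
                   (forall i, (n <= i)%nat -> x i = 0) }.

Definition cube_open (n : nat) : topology (cube n) := fun U =>
  forall x : cube n, U x -> exists e, 0 < e /\
    forall y : cube n,
      (forall i, (i < n)%nat -> Rabs (proj1_sig y i - proj1_sig x i) < e) -> U y.

Definition dgenerated {T : Type} (O : topology T) : Prop :=
  forall U : T -> Prop,
    (forall (n : nat) (f : cube n -> T),
        continuous (cube_open n) O f -> cube_open n (fun z => U (f z))) ->
    O U.

Record dspace := {
  dcar :> Type;
  dopen : topology dcar;
  dopen_top : is_topology dopen;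
  dopen_dgen : dgenerated dopen }.

Definition I01 : Type := { t : R | 0 <= t <= 1 }.

Definition I01_open : topology I01 := fun U =>
  forall t : I01, U t -> exists e, 0 < e /\
    forall s : I01, Rabs (proj1_sig s - proj1_sig t) < e -> U s.

Definition cubeI_open (n : nat) : topology (cube n * I01) := fun W =>
  forall p, W p -> exists e, 0 < e /\ forall q : cube n * I01,
    (forall i, (i < n)%nat ->
       Rabs (proj1_sig (fst q) i - proj1_sig (fst p) i) < e) ->
    Rabs (proj1_sig (snd q) - proj1_sig (snd p)) < e -> W q.

Definition I0 : I01. exists 0; lra. Defined.
Definition I1 : I01. exists 1; lra. Defined.

Definition clampI (x : R) : I01.
Proof.
  exists (Rmax 0 (Rmin 1 x)).
  unfold Rmax, Rmin; destruct (Rle_dec 1 x); destruct (Rle_dec 0 _); lra.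
Defined.

Definition concatN {T : Type} (g1 g2 : I01 -> T) : I01 -> T := fun t =>
  if Rle_dec (proj1_sig t) (1/2) then g1 (clampI (2 * proj1_sig t))
  else g2 (clampI (2 * proj1_sig t - 1)).

Definition G11 (phi : I01 -> I01) : Prop :=
  continuous I01_open I01_open phi /\
  (exists psi : I01 -> I01, continuous I01_open I01_open psi /\
     (forall t, psi (phi t) = t) /\ (forall t, phi (psi t) = t)) /\
  (forall s t, proj1_sig s <= proj1_sig t ->
               proj1_sig (phi s) <= proj1_sig (phi t)).

Record mdtop := {
  msp : dspace;
  mst : msp -> Prop;
  mpth : (I01 -> msp) -> Prop;
  mpth_cont : forall g, mpth g -> continuous I01_open (dopen msp) g;
  mpth_src : forall g, mpth g -> mst (g I0);
  mpth_tgt : forall g, mpth g -> mst (g I1);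
  mpth_G11 : forall g phi, mpth g -> G11 phi -> mpth (fun t => g (phi t));
  mpth_concat : forall g1 g2, mpth g1 -> mpth g2 -> g1 I1 = g2 I0 ->
                 mpth (concatN g1 g2) }.

Record mhom (X Y : mdtop) := {
  mfun :> msp X -> msp Y;
  mfun_cont : continuous (dopen (msp X)) (dopen (msp Y)) mfun;
  mfun_st : forall x, mst X x -> mst Y (mfun x);
  mfun_pth : forall g, mpth X g -> mpth Y (fun t => mfun (g t)) }.
Arguments mfun {X Y}.
Arguments mfun_st {X Y}.
Arguments mfun_pth {X Y}.
Arguments mfun_cont {X Y}.

Definition mid (X : mdtop) : mhom X X.
Proof.
  refine {| mfun := fun x => x |}.
  - intros V HV; exact HV.
  - intros x Hx; exact Hx.
  - intros g Hg; exact Hg.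
Defined.

Definition mcompose {X Y Z : mdtop} (g : mhom Y Z) (f : mhom X Y) : mhom X Z.
Proof.
  refine {| mfun := fun x => g (f x) |}.
  - intros V HV. exact (mfun_cont f _ (mfun_cont g V HV)).
  - intros x Hx. exact (mfun_st g _ (mfun_st f x Hx)).
  - intros h Hh. exact (mfun_pth g _ (mfun_pth f h Hh)).
Defined.

(* A flow is encoded by its set of states, the total space of execution
   paths P Y = disjoint sum of the P_{a,b} Y, source/target maps and the
   composition (only meaningful on composable pairs). *)
Record fdata := {
  fst_ : Type;
  fpth : Type;
  fsrc : fpth -> fst_;
  ftgt : fpth -> fst_;
  fopen : topology fpth;
  fcomp : fpth -> fpth -> fpth }.

Record flow := {
  fd :> fdata;
  fl_top : is_topology (fopen fd);
  fl_dgen : dgenerated (fopen fd);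
  (* P Y is the topological sum of the P_{a,b} Y *)
  fl_fibre_open : forall a b, fopen fd (fun p => fsrc fd p = a /\ ftgt fd p = b);
  fl_comp_src : forall p q, ftgt fd p = fsrc fd q -> fsrc fd (fcomp fd p q) = fsrc fd p;
  fl_comp_tgt : forall p q, ftgt fd p = fsrc fd q -> ftgt fd (fcomp fd p q) = ftgt fd q;
  fl_assoc : forall p q r, ftgt fd p = fsrc fd q -> ftgt fd q = fsrc fd r ->
     fcomp fd (fcomp fd p q) r = fcomp fd p (fcomp fd q r);
  (* continuity of P_{a,b} x P_{b,c} -> P_{a,c} (Delta-kelleyfied product) *)
  fl_comp_cont : forall n (f g : cube n -> fpth fd),
     continuous (cube_open n) (fopen fd) f ->
     continuous (cube_open n) (fopen fd) g ->
     (forall z, ftgt fd (f z) = fsrc fd (g z)) ->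
     continuous (cube_open n) (fopen fd) (fun z => fcomp fd (f z) (g z)) }.

Record fhom (D D' : fdata) := {
  hst : fst_ D -> fst_ D';
  hp : fpth D -> fpth D';
  hp_cont : continuous (fopen D) (fopen D') hp;
  hp_src : forall p, fsrc D' (hp p) = hst (fsrc D p);
  hp_tgt : forall p, ftgt D' (hp p) = hst (ftgt D p);
  hp_comp : forall p q, ftgt D p = fsrc D q ->
              hp (fcomp D p q) = fcomp D' (hp p) (hp q) }.
Arguments hst {D D'}.
Arguments hp {D D'}.
Arguments hp_cont {D D'}.
Arguments hp_src {D D'}.
Arguments hp_tgt {D D'}.
Arguments hp_comp {D D'}.

Definition fid (D : fdata) : fhom D D.
Proof.
  refine {| hst := fun x => x; hp := fun p => p |}.
  - intros V HV; exact HV.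
  - intros p; reflexivity.
  - intros p; reflexivity.
  - intros p q _; reflexivity.
Defined.

Definition fcompose {D1 D2 D3 : fdata} (h : fhom D2 D3) (k : fhom D1 D2) : fhom D1 D3.
Proof.
  refine {| hst := fun x => hst h (hst k x); hp := fun p => hp h (hp k p) |}.
  - intros V HV. exact (hp_cont k _ (hp_cont h V HV)).
  - intros p. rewrite hp_src, hp_src. reflexivity.
  - intros p. rewrite hp_tgt, hp_tgt. reflexivity.
  - intros p q e. rewrite (hp_comp k p q e). apply hp_comp.
    rewrite hp_tgt, hp_src, e. reflexivity.
Defined.

Definition Pst (X : mdtop) : Type := { x : msp X | mst X x }.
Definition Ppath (X : mdtop) : Type := { g : I01 -> msp X | mpth X g }.

Definition Psrc {X : mdtop} (g : Ppath X) : Pst X :=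
  exist _ (proj1_sig g I0) (mpth_src X _ (proj2_sig g)).
Definition Ptgt {X : mdtop} (g : Ppath X) : Pst X :=
  exist _ (proj1_sig g I1) (mpth_tgt X _ (proj2_sig g)).

(* topology of the sum over (a,b) of P^G_{a,b} X, each a Delta-kelleyfied
   subspace of TOP([0,1],|X|): final w.r.t. the maps from cubes landing in one
   P^G_{a,b} X whose adjoint cube n x [0,1] -> |X| is continuous *)
Definition PG_open (X : mdtop) : topology (Ppath X) := fun U =>
  forall (n : nat) (f : cube n -> Ppath X),
    (exists a b : msp X, forall z, proj1_sig (f z) I0 = a /\ proj1_sig (f z) I1 = b) ->
    continuous (cubeI_open n) (dopen (msp X))
      (fun p => proj1_sig (f (fst p)) (snd p)) ->
    cube_open n (fun z => U (f z)).

(* the relation identified by the coequalizer: c ~ c o phi *)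
Definition reparR {X : mdtop} (g d : Ppath X) : Prop :=
  exists phi, G11 phi /\ forall t, proj1_sig d t = proj1_sig g (phi t).

Definition reparEq {X : mdtop} : Ppath X -> Ppath X -> Prop :=
  clos_refl_sym_trans (Ppath X) reparR.

(* the underlying set of the coequalizer: equivalence classes *)
Definition Catp (X : mdtop) : Type :=
  { S : Ppath X -> Prop | exists g, S = reparEq g }.

Definition cls {X : mdtop} (g : Ppath X) : Catp X :=
  exist _ (reparEq g) (ex_intro _ g eq_refl).

Definition rep {X : mdtop} (S : Catp X) : Ppath X :=
  proj1_sig (constructive_indefinite_description _ (proj2_sig S)).

Definition cat_comp {X : mdtop} (S T : Catp X) : Catp X :=
  match excluded_middle_informative (proj1_sig (rep S) I1 = proj1_sig (rep T) I0) with
  | left e => cls (exist _ (concatN (proj1_sig (rep S)) (proj1_sig (rep T)))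
                     (mpth_concat X _ _ (proj2_sig (rep S)) (proj2_sig (rep T)) e))
  | right _ => S
  end.

Definition cat (X : mdtop) : fdata := {|
  fst_ := Pst X;
  fpth := Catp X;
  fsrc := fun S => Psrc (rep S);
  ftgt := fun S => Ptgt (rep S);
  fopen := fun V => PG_open X (fun g => V (cls g));
  fcomp := cat_comp |}.

Definition cat_st {X X' : mdtop} (g : mhom X X') (x : Pst X) : Pst X' :=
  exist _ (g (proj1_sig x)) (mfun_st g _ (proj2_sig x)).
Definition cat_pth {X X' : mdtop} (g : mhom X X') (S : Catp X) : Catp X' :=
  cls (exist _ (fun t => g (proj1_sig (rep S) t)) (mfun_pth g _ (proj2_sig (rep S)))).

Record functorFM := {
  Fob : flow -> mdtop;
  Fmap : forall Y Y' : flow, fhom Y Y' -> mhom (Fob Y) (Fob Y');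
  Fmap_id : forall Y : flow, Fmap Y Y (fid Y) = mid (Fob Y);
  Fmap_comp : forall (Y1 Y2 Y3 : flow) (h : fhom Y2 Y3) (k : fhom Y1 Y2),
      Fmap Y1 Y3 (fcompose h k) = mcompose (Fmap Y2 Y3 h) (Fmap Y1 Y2 k) }.

Definition cat_is_left_adjoint : Prop :=
  exists (G : functorFM)
    (Phi : forall (X : mdtop) (Y : flow), fhom (cat X) Y -> mhom X (Fob G Y))
    (Psi : forall (X : mdtop) (Y : flow), mhom X (Fob G Y) -> fhom (cat X) Y),
    (forall X Y h, Psi X Y (Phi X Y h) = h) /\
    (forall X Y k, Phi X Y (Psi X Y k) = k) /\
    (forall X (Y Y' : flow) (h : fhom Y Y') (k : fhom (cat X) Y),
        Phi X Y' (fcompose h k) = mcompose (Fmap G Y Y' h) (Phi X Y k)) /\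
    (forall (X X' : mdtop) (Y : flow) (g : mhom X' X)
            (k : fhom (cat X) Y) (k' : fhom (cat X') Y),
        (* k' = k o cat(g) *)
        (forall x, hst k' x = hst k (cat_st g x)) ->
        (forall S, hp k' S = hp k (cat_pth g S)) ->
        Phi X' Y k' = mcompose (Phi X Y k) g).

Definition cat_is_right_adjoint : Prop :=
  exists (F : functorFM)
    (Phi : forall (Y : flow) (X : mdtop), mhom (Fob F Y) X -> fhom Y (cat X))
    (Psi : forall (Y : flow) (X : mdtop), fhom Y (cat X) -> mhom (Fob F Y) X),
    (forall Y X m, Psi Y X (Phi Y X m) = m) /\
    (forall Y X k, Phi Y X (Psi Y X k) = k) /\
    (forall (Y Y' : flow) X (h : fhom Y' Y) (m : mhom (Fob F Y) X),
        Phi Y' X (mcompose m (Fmap F Y' Y h)) = fcompose (Phi Y X m) h) /\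
    (forall (Y : flow) (X X' : mdtop) (g : mhom X X') (m : mhom (Fob F Y) X),
        (* Phi (g o m) = cat(g) o Phi m *)
        (forall y, hst (Phi Y X' (mcompose g m)) y = cat_st g (hst (Phi Y X m) y)) /\
        (forall p, hp (Phi Y X' (mcompose g m)) p = cat_pth g (hp (Phi Y X m) p))).

(* Main.v *)
Require Import Defs.
From Stdlib Require Import Reals Lra Lia ClassicalEpsilon Relation_Operators
  FunctionalExtensionality PropExtensionality ProofIrrelevance.
Open Scope R_scope.

Lemma sig_eq {A : Type} {P : A -> Prop} (x y : sig P) :
  proj1_sig x = proj1_sig y -> x = y.
Proof.
  destruct x as [x Hx], y as [y Hy]; simpl; intros E; subst.
  f_equal; apply proof_irrelevance.
Qed.

Lemma fhom_ext {D D' : fdata} (h h' : fhom D D') :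
  (forall x, hst h x = hst h' x) -> (forall p, hp h p = hp h' p) -> h = h'.
Proof.
  destruct h as [s1 p1 c1 a1 b1 d1], h' as [s2 p2 c2 a2 b2 d2]; simpl.
  intros Es Ep.
  assert (s1 = s2) by (apply functional_extensionality; exact Es).
  assert (p1 = p2) by (apply functional_extensionality; exact Ep).
  subst. f_equal; apply proof_irrelevance.
Qed.

Lemma mhom_ext {X Y : mdtop} (m m' : mhom X Y) :
  (forall x, m x = m' x) -> m = m'.
Proof.
  destruct m as [f1 c1 s1 p1], m' as [f2 c2 s2 p2]; simpl. intros E.
  assert (f1 = f2) by (apply functional_extensionality; exact E).
  subst. f_equal; apply proof_irrelevance.
Qed.

Lemma const_open (n : nat) (P : Prop) : cube_open n (fun _ => P).
Proof. intros x Hx. exists 1. split; [lra|]. intros; exact Hx. Qed.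

Definition full_open (T : Type) : topology T := fun _ => True.
Lemma full_top T : is_topology (full_open T).
Proof. split; [exact I| split; intros; exact I]. Qed.
Lemma full_dgen T : dgenerated (full_open T).
Proof. intros U _; exact I. Qed.
Definition dsp_full (T : Type) : dspace :=
  {| dcar := T; dopen := full_open T; dopen_top := full_top T; dopen_dgen := full_dgen T |}.

Definition fin_open (T : Type) : topology T := fun U =>
  forall n (f : cube n -> T), cube_open n (fun z => U (f z)).
Lemma fin_top T : is_topology (fin_open T).
Proof.
  split; [|split].
  - intros n f. apply (const_open n True).
  - intros U V HU HV n f x [Ux Vx].
    destruct (HU n f x Ux) as [e1 [He1 H1]].
    destruct (HV n f x Vx) as [e2 [He2 H2]].
    exists (Rmin e1 e2). split; [apply Rmin_pos; auto|].
    intros y Hy. split.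
    + apply H1. intros i Hi. specialize (Hy i Hi). pose proof (Rmin_l e1 e2). lra.
    + apply H2. intros i Hi. specialize (Hy i Hi). pose proof (Rmin_r e1 e2). lra.
  - intros F HF n f x [U [FU Ux]].
    destruct (HF U FU n f x Ux) as [e [He H]].
    exists e. split; auto. intros y Hy. exists U. split; auto.
Qed.
Lemma fin_dgen T : dgenerated (fin_open T).
Proof. intros U HU n f. apply HU. intros V HV. exact (HV n f). Qed.
Definition dsp_fin (T : Type) : dspace :=
  {| dcar := T; dopen := fin_open T; dopen_top := fin_top T; dopen_dgen := fin_dgen T |}.

Lemma clamp_val (x : R) : 0 <= x <= 1 -> proj1_sig (clampI x) = x.
Proof.
  intros H. unfold clampI; simpl. unfold Rmax, Rmin.
  destruct (Rle_dec 1 x); destruct (Rle_dec 0 _); lra.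
Qed.

Lemma clampI_id (t : I01) : clampI (proj1_sig t) = t.
Proof. apply sig_eq. apply clamp_val. exact (proj2_sig t). Qed.

Definition cpt (t : I01) : cube 1.
Proof.
  exists (fun i => match i with O => proj1_sig t | _ => 0 end). split.
  - intros i Hi. destruct i; [destruct t; simpl; lra | lia].
  - intros i Hi. destruct i; [lia | reflexivity].
Defined.

Lemma fin_cont_any (T : Type) (g : I01 -> T) :
  continuous I01_open (fin_open T) g.
Proof.
  intros V HV t Vt.
  pose (f := fun z : cube 1 => g (clampI (proj1_sig z 0%nat))).
  assert (Hz : V (f (cpt t))).
  { unfold f. simpl. rewrite clampI_id. exact Vt. }
  destruct (HV 1%nat f (cpt t) Hz) as [e [He H]].
  exists e. split; auto. intros s Hs.
  specialize (H (cpt s)). unfold f in H. simpl in H. rewrite !clampI_id in H.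
  apply H. intros i Hi. destruct i; [simpl; exact Hs| lia].
Qed.

Lemma G11_I0 (phi : I01 -> I01) : G11 phi -> phi I0 = I0.
Proof.
  intros [_ [[psi [_ [_ Hpp]]] Hm]]. apply sig_eq. simpl.
  pose proof (proj2_sig (phi I0)). simpl in H.
  assert (proj1_sig I0 <= proj1_sig (psi I0)) by (simpl; pose proof (proj2_sig (psi I0)); simpl in *; lra).
  pose proof (Hm _ _ H0). rewrite Hpp in H1. simpl in H1. lra.
Qed.

Lemma G11_I1 (phi : I01 -> I01) : G11 phi -> phi I1 = I1.
Proof.
  intros [_ [[psi [_ [_ Hpp]]] Hm]]. apply sig_eq. simpl.
  pose proof (proj2_sig (phi I1)). simpl in H.
  assert (proj1_sig (psi I1) <= proj1_sig I1) by (simpl; pose proof (proj2_sig (psi I1)); simpl in *; lra).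
  pose proof (Hm _ _ H0). rewrite Hpp in H1. simpl in H1. lra.
Qed.

Lemma reparEq_ends {X : mdtop} (g d : Ppath X) : reparEq g d ->
  proj1_sig g I0 = proj1_sig d I0 /\ proj1_sig g I1 = proj1_sig d I1.
Proof.
  unfold reparEq. intros H. induction H.
  - destruct H as [phi [Hphi E]]. rewrite !E, G11_I0, G11_I1 by exact Hphi. auto.
  - auto.
  - destruct IHclos_refl_sym_trans; auto.
  - destruct IHclos_refl_sym_trans1, IHclos_refl_sym_trans2; split; congruence.
Qed.

Lemma rep_cls {X : mdtop} (c : Ppath X) : reparEq c (rep (cls c)).
Proof.
  unfold rep. destruct (constructive_indefinite_description _ _) as [r Hr].
  simpl in *. rewrite Hr. apply rst_refl.
Qed.

Lemma cls_eq {X : mdtop} (g d : Ppath X) : reparEq g d -> cls g = cls d.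
Proof.
  intros H. apply sig_eq. simpl. apply functional_extensionality. intros h.
  apply propositional_extensionality. split; intros H'.
  - eapply rst_trans; [apply rst_sym; exact H| exact H'].
  - eapply rst_trans; [exact H| exact H'].
Qed.

Lemma cls_inj {X : mdtop} (g d : Ppath X) : cls g = cls d -> reparEq g d.
Proof.
  intros E. apply (f_equal (@proj1_sig _ _)) in E. simpl in E.
  assert (H : reparEq d d) by apply rst_refl. rewrite <- E in H. exact H.
Qed.

Definition mapP {X X' : mdtop} (m : mhom X X') (g : Ppath X) : Ppath X' :=
  exist _ (fun t => m (proj1_sig g t)) (mfun_pth m _ (proj2_sig g)).

Lemma reparEq_map {X X' : mdtop} (m : mhom X X') (g d : Ppath X) :
  reparEq g d -> reparEq (mapP m g) (mapP m d).
Proof.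
  unfold reparEq. intros H. induction H.
  - apply rst_step. destruct H as [phi [Hphi E]]. exists phi. split; auto.
    intros t. simpl. rewrite E. reflexivity.
  - apply rst_refl.
  - apply rst_sym; auto.
  - eapply rst_trans; eauto.
Qed.

Lemma cat_pth_cls {X X' : mdtop} (m : mhom X X') (c : Ppath X) :
  cat_pth m (cls c) = cls (mapP m c).
Proof.
  unfold cat_pth. apply cls_eq. apply rst_sym.
  apply (reparEq_map m c (rep (cls c))). apply rep_cls.
Qed.

Definition Yd : fdata := {|
  fst_ := bool; fpth := unit; fsrc := fun _ => false; ftgt := fun _ => true;
  fopen := full_open unit; fcomp := fun p _ => p |}.

Definition Yf : flow.
Proof.
  refine {| fd := Yd |}.
  - apply full_top.
  - apply full_dgen.
  - intros; exact I.
  - simpl; intros; discriminate.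
  - simpl; intros; discriminate.
  - simpl; intros; discriminate.
  - intros n f g Hf Hg _. exact Hf.
Defined.

Definition X0 : mdtop.
Proof.
  refine {| msp := dsp_full unit; mst := fun _ => False; mpth := fun _ => False |};
  intros; contradiction.
Defined.

Definition X1 : mdtop.
Proof.
  refine {| msp := dsp_full unit; mst := fun _ => True; mpth := fun _ => False |};
  intros; contradiction.
Defined.

Lemma Catp_X1_empty (p : Catp X1) : False.
Proof. destruct p as [S [[g Hg] _]]. exact Hg. Qed.

Definition kb (b : bool) : fhom (cat X1) Yf.
Proof.
  refine (Build_fhom (cat X1) Yf (fun _ => b) (fun _ => tt) _ _ _ _).
  - intros V HV n f _ _ x _. destruct (f x) as [g Hg]. destruct Hg.
  - intros p. destruct (Catp_X1_empty p).
  - intros p. destruct (Catp_X1_empty p).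
  - intros p. destruct (Catp_X1_empty p).
Defined.

Definition mconst (Z : mdtop) (u : msp Z) : mhom X0 Z.
Proof.
  refine {| mfun := fun _ => u |}.
  - intros V HV. exact I.
  - intros x H. destruct H.
  - intros g H. destruct H.
Defined.

Lemma fhom_X0_unique (D : fdata) (h h' : fhom (cat X0) D) : h = h'.
Proof.
  apply fhom_ext.
  - intros [x Hx]. exfalso. exact Hx.
  - intros p. exfalso. destruct p as [S [[g Hg] _]]. exact Hg.
Qed.

Lemma not_left : ~ cat_is_left_adjoint.
Proof.
  intros [G [Phi [Psi [H1 [H2 _]]]]].
  assert (Sub : forall u v : msp (Fob G Yf), u = v).
  { intros u v.
    assert (E : mconst _ u = mconst _ v).
    { rewrite <- (H2 X0 Yf (mconst _ u)), <- (H2 X0 Yf (mconst _ v)).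
      f_equal. apply fhom_X0_unique. }
    apply (f_equal (fun m : mhom X0 (Fob G Yf) => mfun m (tt : msp X0))) in E. exact E. }
  assert (E : kb true = kb false).
  { rewrite <- (H1 X1 Yf (kb true)), <- (H1 X1 Yf (kb false)). f_equal.
    apply mhom_ext. intros; apply Sub. }
  apply (f_equal (fun h : fhom (cat X1) Yf => hst h (exist _ tt I : Pst X1))) in E. discriminate E.
Qed.

Definition Pm : mdtop :=
  {| msp := dsp_fin (R * R); mst := fun _ => True; mpth := fun _ => True;
     mpth_cont := fun g _ => fin_cont_any _ g;
     mpth_src := fun _ _ => I; mpth_tgt := fun _ _ => I;
     mpth_G11 := fun _ _ _ _ => I; mpth_concat := fun _ _ _ _ _ => I |}.

Definition Qm : mdtop :=
  {| msp := dsp_fin R; mst := fun _ => True; mpth := fun _ => True;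
     mpth_cont := fun g _ => fin_cont_any _ g;
     mpth_src := fun _ _ => I; mpth_tgt := fun _ _ => I;
     mpth_G11 := fun _ _ _ _ => I; mpth_concat := fun _ _ _ _ _ => I |}.

Definition proj_m (first : bool) : mhom Pm Qm.
Proof.
  refine (Build_mhom Pm Qm (fun x : R * R => if first then fst x else snd x) _ _ _).
  - intros V HV n f. exact (HV n (fun z => if first then fst (f z) else snd (f z))).
  - intros; exact I.
  - intros; exact I.
Defined.

Definition pw (t : R) : R := if Rle_dec t (1/2) then t/2 else 3/2*t - 1/2.
Definition pwi (u : R) : R := if Rle_dec u (1/4) then 2*u else (2*u+1)/3.
Definition phi0 (t : I01) : I01 := clampI (pw (proj1_sig t)).
Definition psi0 (u : I01) : I01 := clampI (pwi (proj1_sig u)).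

Lemma phi0_val t : proj1_sig (phi0 t) = pw (proj1_sig t).
Proof.
  unfold phi0. apply clamp_val. destruct t as [t Ht]; simpl.
  unfold pw; destruct Rle_dec; lra.
Qed.
Lemma psi0_val t : proj1_sig (psi0 t) = pwi (proj1_sig t).
Proof.
  unfold psi0. apply clamp_val. destruct t as [t Ht]; simpl.
  unfold pwi; destruct Rle_dec; lra.
Qed.

Lemma cont_lip (h : I01 -> I01) :
  (forall s t, Rabs (proj1_sig (h s) - proj1_sig (h t)) <= 2 * Rabs (proj1_sig s - proj1_sig t)) ->
  continuous I01_open I01_open h.
Proof.
  intros L V HV t Vt. destruct (HV (h t) Vt) as [e [He H]].
  exists (e/2). split; [lra|]. intros s Hs. apply H.
  specialize (L s t). lra.
Qed.

Ltac rabs := unfold Rabs; repeat destruct Rcase_abs; lra.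

Lemma G11_phi0 : G11 phi0.
Proof.
  split; [|split].
  - apply cont_lip. intros s t. rewrite !phi0_val. unfold pw.
    destruct (Rle_dec (proj1_sig s) _); destruct (Rle_dec (proj1_sig t) _); rabs.
  - exists psi0. split; [|split].
    + apply cont_lip. intros s t. rewrite !psi0_val. unfold pwi.
      destruct (Rle_dec (proj1_sig s) _); destruct (Rle_dec (proj1_sig t) _); rabs.
    + intros t. apply sig_eq. rewrite psi0_val, phi0_val. unfold pwi, pw.
      destruct (Rle_dec (proj1_sig t) (1/2)); destruct (Rle_dec _ (1/4)); lra.
    + intros t. apply sig_eq. rewrite phi0_val, psi0_val. unfold pwi, pw.
      destruct (Rle_dec (proj1_sig t) (1/4)); destruct (Rle_dec _ (1/2)); lra.
  - intros s t Hst. rewrite !phi0_val. unfold pw.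
    destruct (Rle_dec (proj1_sig s) _); destruct (Rle_dec (proj1_sig t) _); lra.
Qed.

Definition cD : Ppath Pm := exist _ (fun t => (proj1_sig t, proj1_sig t)) I.
Definition cD' : Ppath Pm := exist _ (fun t => (proj1_sig t, proj1_sig (phi0 t))) I.

Definition hstP (b : bool) : Pst Pm :=
  if b then exist _ ((1,1) : R * R) I else exist _ ((0,0) : R * R) I.

Definition mk_k (c : Ppath Pm) (H0 : proj1_sig c I0 = (0,0)) (H1 : proj1_sig c I1 = (1,1)) :
  fhom Yf (cat Pm).
Proof.
  refine (Build_fhom Yf (cat Pm) hstP (fun _ => cls c) _ _ _ _).
  - intros V HV. exact I.
  - intros p. apply sig_eq. simpl.
    destruct (reparEq_ends _ _ (rep_cls c)) as [E _]. exact (eq_trans (eq_sym E) H0).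
  - intros p. apply sig_eq. simpl.
    destruct (reparEq_ends _ _ (rep_cls c)) as [_ E]. exact (eq_trans (eq_sym E) H1).
  - simpl; intros; discriminate.
Defined.

Lemma cD_0 : proj1_sig cD I0 = (0,0). Proof. reflexivity. Qed.
Lemma cD_1 : proj1_sig cD I1 = (1,1). Proof. reflexivity. Qed.
Lemma cD'_0 : proj1_sig cD' I0 = (0,0).
Proof. transitivity ((0, proj1_sig (phi0 I0)) : R * R); [reflexivity|]. rewrite phi0_val. simpl. unfold pw. destruct Rle_dec; f_equal; lra. Qed.
Lemma cD'_1 : proj1_sig cD' I1 = (1,1).
Proof. transitivity ((1, proj1_sig (phi0 I1)) : R * R); [reflexivity|]. rewrite phi0_val. simpl. unfold pw. destruct Rle_dec; f_equal; lra. Qed.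

Definition Inv (g : Ppath Pm) : Prop :=
  forall t, fst (proj1_sig g t) = snd (proj1_sig g t).

Lemma Inv_repar (g d : Ppath Pm) : reparEq g d -> (Inv g <-> Inv d).
Proof.
  unfold reparEq. intros H. induction H.
  - destruct H as [phi [Hphi E]]. unfold Inv. split; intros Hi t.
    + rewrite E. apply Hi.
    + destruct Hphi as [_ [[psi [_ [_ Hpp]]] _]].
      rewrite <- (Hpp t). rewrite <- E. apply Hi.
  - tauto.
  - tauto.
  - tauto.
Qed.

Definition Ihalf : I01.
Proof. exists (1/2). lra. Defined.

Lemma not_Inv_cD' : ~ Inv cD'.
Proof.
  intros H. specialize (H Ihalf).
  change (proj1_sig Ihalf = proj1_sig (phi0 Ihalf)) in H. rewrite phi0_val in H. simpl in H.
  unfold pw in H. destruct Rle_dec; lra.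
Qed.

Lemma not_right : ~ cat_is_right_adjoint.
Proof.
  intros [F [Phi [Psi [H1 [H2 [_ H4]]]]]].
  set (k := mk_k cD cD_0 cD_1).
  set (k' := mk_k cD' cD'_0 cD'_1).
  assert (Gen : forall pi : mhom Pm Qm,
     cat_pth pi (cls cD) = cat_pth pi (cls cD') ->
     mcompose pi (Psi Yf Pm k) = mcompose pi (Psi Yf Pm k')).
  { intros pi HS.
    rewrite <- (H1 Yf Qm (mcompose pi (Psi _ _ k))), <- (H1 Yf Qm (mcompose pi (Psi _ _ k'))).
    f_equal. destruct (H4 Yf Pm Qm pi (Psi Yf Pm k)) as [A B].
    destruct (H4 Yf Pm Qm pi (Psi Yf Pm k')) as [A' B'].
    apply fhom_ext.
    - intros y. rewrite A, A', !H2. reflexivity.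
    - intros p. rewrite B, B', !H2. exact HS. }
  assert (E1 := Gen (proj_m true)).
  assert (E2 := Gen (proj_m false)).
  clear Gen.
  assert (HS1 : cat_pth (proj_m true) (cls cD) = cat_pth (proj_m true) (cls cD')).
  { rewrite !cat_pth_cls. apply cls_eq.
    replace (mapP (proj_m true) cD') with (mapP (proj_m true) cD).
    - apply rst_refl.
    - apply sig_eq. reflexivity. }
  assert (HS2 : cat_pth (proj_m false) (cls cD) = cat_pth (proj_m false) (cls cD')).
  { rewrite !cat_pth_cls. apply cls_eq. apply rst_step.
    exists phi0. split; [apply G11_phi0|]. intros t. reflexivity. }
  specialize (E1 HS1). specialize (E2 HS2).
  assert (Em : Psi Yf Pm k = Psi Yf Pm k').
  { apply mhom_ext. intros x.
    apply (f_equal (fun m => mfun m x)) in E1.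
    apply (f_equal (fun m => mfun m x)) in E2. simpl in E1, E2.
    destruct (mfun (Psi Yf Pm k) x), (mfun (Psi Yf Pm k') x). simpl in *.
    subst. reflexivity. }
  assert (Ek : k = k').
  { rewrite <- (H2 Yf Pm k), <- (H2 Yf Pm k'), Em. reflexivity. }
  apply (f_equal (fun h : fhom Yf (cat Pm) => hp h (tt : fpth Yf))) in Ek. simpl in Ek.
  apply cls_inj in Ek.
  apply not_Inv_cD'. apply (Inv_repar _ _ Ek). intros t. reflexivity.
Qed.

Theorem theorem8p8 : ~ cat_is_left_adjoint /\ ~ cat_is_right_adjoint.
Proof. split; [exact not_left | exact not_right]. Qed.
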